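(* For every $k\ge 8$, the connected component of $\mathbf{DCM}_k$ containing the rings is not bipartite.
   Context: Let $k\ge 1$ and let $X_{2k}=\{P_1,\dots,P_{2k}\}$ be $2k$ points in convex position in the plane, labeled in clockwise cyclic order. A matching of $X_{2k}$ means a set of $k$ pairwise non-crossing straight segments (edges) with endpoints in $X_{2k}$ covering every point exactly once. Two matchings $M,M'$ of $X_{2k}$ are disjoint compatible if they have no common edge and no edge of $M$ crosses an edge of $M'$. $\mathbf{DCM}_k$ is the graph whose vertices are the matchings of $X_{2k}$, two being adjacent iff they are disjoint compatible. The rings of $X_{2k}$ ($k\ge 2$) are the two matchings $\{P_1P_2,P_3P_4,\dots,P_{2k-1}P_{2k}\}$ and $\{P_2P_3,P_4P_5,\dots,P_{2k}P_1\}$; they are disjoint compatible to each other, hence lie in the same component. *)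

(* Defs.v *)
From mathcomp Require Import all_boot.
Set Implicit Arguments. Unset Strict Implicit. Unset Printing Implicit Defensive.

(* Points P_1..P_{2k} in convex position, clockwise, are encoded by their
   labels 0..2k-1 (P_{i+1} <-> i : 'I_(k.*2)).  Since the points are in convex
   position, whether two segments cross depends only on the cyclic order. *)

Definition strictly_between (a b x : nat) : bool := (minn a b < x < maxn a b).

(* The (closed) segments P_aP_b and P_cP_d, with a != b, c != d, cross
   (properly, i.e. share an interior point) iff their four endpoints are
   distinct and exactly one of c, d lies on each side of the chord ab. *)
Definition seg_cross n (a b c d : 'I_n) : bool :=
  [&& a != c, a != d, b != c, b != d &
      strictly_between a b c (+) strictly_between a b d].

(* A matching is encoded by the fixed-point-free involution f mapping each
   point to its partner; its edges are the segments P_i P_(f i). *)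
Definition is_matching n (f : {ffun 'I_n -> 'I_n}) : bool :=
  [forall i, (f i != i) && (f (f i) == i)] &&
  [forall i, forall j, ~~ seg_cross i (f i) j (f j)].

Definition disj_compat n (f g : {ffun 'I_n -> 'I_n}) : bool :=
  [forall i, f i != g i] &&
  [forall i, forall j, ~~ seg_cross i (f i) j (g j)].

(* adjacency of DCM_k; functions that are not matchings are isolated and
   play no role (they are not in the component of the rings). *)
Definition dcm_adj k : rel {ffun 'I_(k.*2) -> 'I_(k.*2)} :=
  fun f g => [&& is_matching f, is_matching g & disj_compat f g].

(* the ring {P1P2, P3P4, ..., P_{2k-1}P_{2k}} *)
Definition ring1 k : {ffun 'I_(k.*2) -> 'I_(k.*2)} :=
  [ffun i : 'I_(k.*2) => insubd i (if odd i then i.-1 else i.+1)].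

(* the ring {P2P3, P4P5, ..., P_{2k}P1} *)
Definition ring2 k : {ffun 'I_(k.*2) -> 'I_(k.*2)} :=
  [ffun i : 'I_(k.*2) => insubd i (if odd i then i.+1 %% k.*2 else (i + k.*2).-1 %% k.*2)].

Definition dcm_component k (x : {ffun 'I_(k.*2) -> 'I_(k.*2)}) :=
  [pred y | connect (@dcm_adj k) x y].

Definition induced_bipartite k (C : pred {ffun 'I_(k.*2) -> 'I_(k.*2)}) : Prop :=
  exists c : {ffun 'I_(k.*2) -> 'I_(k.*2)} -> bool,
    forall x y, x \in C -> y \in C -> dcm_adj x y -> c x != c y.

(* Main.v *)
Require Import Defs.
From mathcomp Require Import all_boot zify.
Set Implicit Arguments. Unset Strict Implicit. Unset Printing Implicit Defensive.

Definition ncross (a b c d : nat) : bool :=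
  [&& a != c, a != d, b != c, b != d &
      strictly_between a b c (+) strictly_between a b d].

Section L.
Variable n : nat.
Local Notation "s @@ i" := (nth 0 s i) (at level 30, no associativity).

Definition matchP (s : seq nat) : Prop :=
  (forall i, i < n -> [/\ (s @@ i) < n, (s @@ i) != i & s @@ ((s @@ i)) = i]) /\
  (forall i j, i < n -> j < n -> ~~ ncross i (s @@ i) j (s @@ j)).
Definition compatP (s t : seq nat) : Prop :=
  (forall i, i < n -> (s @@ i) != (t @@ i)) /\
  (forall i j, i < n -> j < n -> ~~ ncross i (s @@ i) j (t @@ j)).
Definition adjP s t := [/\ matchP s, matchP t & compatP s t].

Definition match_check (s : seq nat) : bool :=
  all (fun i => [&& (s @@ i) < n, (s @@ i) != i & s @@ ((s @@ i)) == i]) (iota 0 n) &&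
  all (fun i => all (fun j => ~~ ncross i (s @@ i) j (s @@ j)) (iota 0 n)) (iota 0 n).
Definition compat_check (s t : seq nat) : bool :=
  all (fun i => (s @@ i) != (t @@ i)) (iota 0 n) &&
  all (fun i => all (fun j => ~~ ncross i (s @@ i) j (t @@ j)) (iota 0 n)) (iota 0 n).
Definition adj_check s t := [&& match_check s, match_check t & compat_check s t].

Lemma match_checkP s : match_check s -> matchP s.
Proof.
case/andP=> /allP H1 /allP H2; split.
  move=> i lin; have := H1 i; rewrite mem_iota add0n leq0n lin => /(_ isT).
  by case/and3P=> -> -> /eqP ->.
move=> i j lin ljn; have := H2 i; rewrite mem_iota add0n leq0n lin => /(_ isT) /allP.
by apply; rewrite mem_iota add0n leq0n.
Qed.

Lemma adj_checkP s t : adj_check s t -> adjP s t.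
Proof.
case/and3P=> /match_checkP ? /match_checkP ? /andP[/allP H1 /allP H2]; split=> //; split.
  by move=> i lin; apply: H1; rewrite mem_iota.
move=> i j lin ljn; have := H2 i; rewrite mem_iota add0n leq0n lin => /(_ isT) /allP.
by apply; rewrite mem_iota add0n leq0n.
Qed.

Definition mk (s : seq nat) : {ffun 'I_n -> 'I_n} := [ffun i : 'I_n => insubd i (s @@ i)].

Lemma mkE s (i : 'I_n) : (s @@ i) < n -> val (mk s i) = (s @@ i).
Proof. by move=> h; rewrite ffunE val_insubd h. Qed.

Lemma seg_crossE (a b c d : 'I_n) : seg_cross a b c d = ncross a b c d.
Proof. by []. Qed.

Definition adjn : rel {ffun 'I_n -> 'I_n} :=
  fun f g => [&& is_matching f, is_matching g & disj_compat f g].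

Lemma matchP_mk s : matchP s -> is_matching (mk s).
Proof.
case=> H1 H2; apply/andP; split; apply/forallP=> i.
  have [h1 h2 h3] := H1 i (ltn_ord i).
  apply/andP; split; first by rewrite -(inj_eq val_inj) /= mkE.
  by rewrite -(inj_eq val_inj) /= mkE ?mkE ?h3 // mkE.
apply/forallP=> j; rewrite seg_crossE.
have [h1 _ _] := H1 i (ltn_ord i); have [h1' _ _] := H1 j (ltn_ord j).
by rewrite !mkE //; apply: H2.
Qed.

Lemma adjP_adj s t : adjP s t -> adjn (mk s) (mk t).
Proof.
case=> Ms Mt [H1 H2]; rewrite /adjn !matchP_mk //=.
case: Ms => Ms _; case: Mt => Mt _.
apply/andP; split; apply/forallP=> i.
  have [h1 _ _] := Ms i (ltn_ord i); have [h1' _ _] := Mt i (ltn_ord i).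
  by rewrite -(inj_eq val_inj) /= !mkE //; apply: H1.
apply/forallP=> j; rewrite seg_crossE.
have [h1 _ _] := Ms i (ltn_ord i); have [h1' _ _] := Mt j (ltn_ord j).
by rewrite !mkE //; apply: H2.
Qed.

Fixpoint lwalk (s u : seq nat) (L : nat) : Prop :=
  match L with 0 => s = u | L'.+1 => exists t, adjP s t /\ lwalk t u L' end.

Fixpoint fwalk (x y : {ffun 'I_n -> 'I_n}) (L : nat) : Prop :=
  match L with 0 => x = y | L'.+1 => exists z, adjn x z /\ fwalk z y L' end.

Lemma lwalk_fwalk L s u : lwalk s u L -> fwalk (mk s) (mk u) L.
Proof.
elim: L s => [|L IH] s /=; first by move->.
by case=> t [/adjP_adj h /IH w]; exists (mk t).
Qed.

Lemma lwalk_cat L1 L2 s t u : lwalk s t L1 -> lwalk t u L2 -> lwalk s u (L1 + L2).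
Proof.
elim: L1 s => [|L IH] s /=; first by move->.
by case=> v [h w] w2; exists v; split=> //; apply: IH w w2.
Qed.

End L.

Definition ringseq n := [seq (if odd i then i.-1 else i.+1) | i <- iota 0 n].

Lemma nth_ringseq n i : i < n -> nth 0 (ringseq n) i = if odd i then i.-1 else i.+1.
Proof. by move=> h; rewrite (nth_map 0) ?size_iota // nth_iota. Qed.

Lemma ring1E k : ring1 k = mk (k.*2) (ringseq k.*2).
Proof. by apply/ffunP=> i; apply: val_inj; rewrite !ffunE !val_insubd nth_ringseq. Qed.

Definition comb m n (s t : seq nat) :=
  [seq (if i < m then nth 0 s i else m + nth 0 t (i - m)) | i <- iota 0 (m + n)].

Lemma nth_comb m n s t i : i < m + n ->
  nth 0 (comb m n s t) i = if i < m then nth 0 s i else m + nth 0 t (i - m).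
Proof. by move=> h; rewrite (nth_map 0) ?size_iota // nth_iota. Qed.

Lemma comb_ring m n : ~~ odd m -> ~~ odd n -> comb m n (ringseq m) (ringseq n) = ringseq (m + n).
Proof.
move=> om on; apply: (@eq_from_nth _ 0); first by rewrite !size_map !size_iota.
move=> i; rewrite size_map size_iota => h; rewrite [RHS]nth_ringseq // nth_comb //.
case: ifP => him; first by rewrite nth_ringseq.
have hm : m <= i by rewrite leqNgt him.
rewrite nth_ringseq; last by lia.
rewrite oddB // (negbTE om) addbF.
case: ifP => oi.
  have hne : i <> m by move=> e; move: oi; rewrite e (negbTE om).
  lia.
have : i.+1 <> m + n.
  move=> e; have := congr1 odd e.
  by rewrite oddD /= oi (negbTE om) (negbTE on).
lia.
Qed.

Lemma ncross_shift m a b c d : ncross (m + a) (m + b) (m + c) (m + d) = ncross a b c d.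
Proof. by rewrite /ncross /strictly_between -!addn_minr -!addn_maxr !ltn_add2l !eqn_add2l. Qed.

Lemma ncross_sep m a b c d : a < m -> b < m -> m <= c -> m <= d ->
  ncross a b c d = false /\ ncross c d a b = false.
Proof.
move=> ha hb hc hd; rewrite /ncross /strictly_between.
have -> : (minn a b < c < maxn a b) = false by apply/negbTE; apply/negP; lia.
have -> : (minn a b < d < maxn a b) = false by apply/negbTE; apply/negP; lia.
have -> : (minn c d < a < maxn c d) = false by apply/negbTE; apply/negP; lia.
have -> : (minn c d < b < maxn c d) = false by apply/negbTE; apply/negP; lia.
by rewrite !andbF.
Qed.

Section Comb.
Variables m n : nat.
Local Notation "s @@ i" := (nth 0 s i) (at level 30, no associativity).

Lemma cross_comb s t s' t' i j : i < m + n -> j < m + n ->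
  (forall i, i < m -> s @@ i < m) -> (forall i, i < n -> t @@ i < n) ->
  (forall i, i < m -> s' @@ i < m) -> (forall i, i < n -> t' @@ i < n) ->
  (forall i j, i < m -> j < m -> ~~ ncross i (s @@ i) j (s' @@ j)) ->
  (forall i j, i < n -> j < n -> ~~ ncross i (t @@ i) j (t' @@ j)) ->
  ~~ ncross i (comb m n s t @@ i) j (comb m n s' t' @@ j).
Proof.
move=> hi hj bs bt bs' bt' Hs Ht; rewrite !nth_comb //.
case: ifP => him; case: ifP => hjm.
- exact: Hs.
- have hjm' : m <= j by rewrite leqNgt hjm.
  by have [-> _] := ncross_sep him (bs _ him) hjm' (leq_addr (t' @@ (j - m)) m).
- have him' : m <= i by rewrite leqNgt him.
  by have [_ ->] := ncross_sep hjm (bs' _ hjm) him' (leq_addr (t @@ (i - m)) m).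
- have him' : m <= i by rewrite leqNgt him.
  have hjm' : m <= j by rewrite leqNgt hjm.
  suff H : ~~ ncross (m + (i - m)) (m + t @@ (i - m)) (m + (j - m)) (m + t' @@ (j - m)).
    by rewrite !subnKC in H.
  rewrite ncross_shift.
  apply: Ht; lia.
Qed.
End Comb.

Section Comb2.
Variables m n : nat.
Local Notation "s @@ i" := (nth 0 s i) (at level 30, no associativity).

Lemma matchP_comb s t : matchP m s -> matchP n t -> matchP (m + n) (comb m n s t).
Proof.
move=> [Hs Xs] [Ht Xt]; split; last first.
  move=> i j hi hj; apply: cross_comb => // k hk.
  - by case: (Hs k hk).
  - by case: (Ht k hk).
  - by case: (Hs k hk).
  - by case: (Ht k hk).
move=> i hi; rewrite nth_comb //; case: ifP => him.
  have [h1 h2 h3] := Hs i him.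
  rewrite nth_comb; last by lia.
  by rewrite h1 h3; split=> //; lia.
have him' : m <= i by rewrite leqNgt him.
have hb : i - m < n by lia.
have [h1 h2 h3] := Ht (i - m) hb.
rewrite nth_comb; last by lia.
have -> : (m + t @@ (i - m) < m) = false by apply/negbTE; lia.
rewrite addKn h3 subnKC //; split=> //; first by lia.
apply/eqP=> e; move/eqP: h2; apply; lia.
Qed.

Lemma compatP_comb s t s' t' : matchP m s -> matchP n t -> matchP m s' -> matchP n t' ->
  compatP m s s' -> compatP n t t' -> compatP (m + n) (comb m n s t) (comb m n s' t').
Proof.
move=> [Hs _] [Ht _] [Hs' _] [Ht' _] [C1 X1] [C2 X2]; split; last first.
  move=> i j hi hj; apply: cross_comb => // k hk.
  - by case: (Hs k hk).
  - by case: (Ht k hk).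
  - by case: (Hs' k hk).
  - by case: (Ht' k hk).
move=> i hi; rewrite !nth_comb //; case: ifP => him; first exact: C1.
by rewrite eqn_add2l; apply: C2; lia.
Qed.

Lemma adjP_comb s t s' t' : adjP m s s' -> adjP n t t' ->
  adjP (m + n) (comb m n s t) (comb m n s' t').
Proof.
case=> M1 M2 C1 [N1 N2 C2]; split; try exact: matchP_comb.
exact: compatP_comb.
Qed.

Lemma lwalk_comb L s t s' t' : lwalk m s s' L -> lwalk n t t' L ->
  lwalk (m + n) (comb m n s t) (comb m n s' t') L.
Proof.
elim: L s t => [|L IH] s t /=; first by move=> -> ->.
case=> u [hu wu] [v [hv wv]]; exists (comb m n u v); split.
  exact: adjP_comb.
exact: IH.
Qed.
End Comb2.

Definition Good n := exists N, forall L, N <= L -> lwalk n (ringseq n) (ringseq n) L.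

Lemma Good_add m n : ~~ odd m -> ~~ odd n -> Good m -> Good n -> Good (m + n).
Proof.
move=> om on [N1 H1] [N2 H2]; exists (maxn N1 N2) => L hL.
rewrite -comb_ring //; apply: lwalk_comb.
  by apply: H1; lia.
by apply: H2; lia.
Qed.

Lemma Good_of n L0 : odd L0 -> lwalk n (ringseq n) (ringseq n) L0 ->
  lwalk n (ringseq n) (ringseq n) 2 -> Good n.
Proof.
move=> oL w0 w2.
have ev : forall j, lwalk n (ringseq n) (ringseq n) j.*2.
  elim=> [|j IH] //; rewrite doubleS -addn2 addnC; exact: lwalk_cat w2 IH.
exists L0 => L hL; case: (boolP (odd L)) => oL'.
  have -> : L = L0 + (L - L0)./2.*2.
    have := odd_double_half (L - L0); rewrite oddB // oL oL' /=; lia.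
  exact: lwalk_cat w0 (ev _).
have := odd_double_half L; rewrite (negbTE oL') add0n => <-; exact: ev.
Qed.

Lemma color k (c : {ffun 'I_(k.*2) -> 'I_(k.*2)} -> bool) L x y :
  (forall x y, x \in dcm_component (ring1 k) -> y \in dcm_component (ring1 k) ->
     dcm_adj x y -> c x != c y) ->
  x \in dcm_component (ring1 k) -> fwalk x y L -> c y = c x (+) odd L.
Proof.
move=> Hc; elim: L x => [|L IH] x /= hx; first by move->; rewrite addbF.
case=> z [hz w].
have hzC : z \in dcm_component (ring1 k).
  rewrite inE; apply: connect_trans (connect1 hz); exact: hx.
rewrite (IH z hzC w); have := Hc x z hx hzC hz.
by case: (c x); case: (c z); case: (odd L).
Qed.

Lemma Good_nb k : Good k.*2 -> ~ induced_bipartite (dcm_component (ring1 k)).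
Proof.
case=> N H [c Hc].
have hN : N <= N.*2.+1 by lia.
have w := lwalk_fwalk (H N.*2.+1 hN).
rewrite -ring1E in w.
have hr : ring1 k \in dcm_component (ring1 k) by rewrite inE connect0.
have := color Hc hr w; rewrite /= odd_double.
by case: (c _).
Qed.
Ltac step l := exists l; split; [apply: adj_checkP; vm_compute; reflexivity | ].
Lemma Good16 : Good 16.
Proof.
apply: (@Good_of 16 5) => //.
  step [:: 5; 2; 1; 4; 3; 0; 15; 14; 13; 10; 9; 12; 11; 8; 7; 6].
  step [:: 15; 4; 3; 2; 1; 6; 5; 8; 7; 12; 11; 10; 9; 14; 13; 0].
  step [:: 13; 2; 1; 4; 3; 8; 7; 6; 5; 10; 9; 12; 11; 0; 15; 14].
  step [:: 15; 12; 11; 10; 9; 6; 5; 8; 7; 4; 3; 2; 1; 14; 13; 0].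
  step (ringseq 16).
  by [].
step [:: 15; 2; 1; 4; 3; 6; 5; 8; 7; 10; 9; 12; 11; 14; 13; 0].
step (ringseq 16).
by [].
Qed.

Lemma Good18 : Good 18.
Proof.
apply: (@Good_of 18 7) => //.
  step [:: 3; 2; 1; 0; 17; 6; 5; 8; 7; 10; 9; 12; 11; 14; 13; 16; 15; 4].
  step [:: 1; 0; 3; 2; 5; 4; 17; 16; 15; 14; 11; 10; 13; 12; 9; 8; 7; 6].
  step [:: 5; 2; 1; 4; 3; 0; 7; 6; 9; 8; 13; 12; 11; 10; 15; 14; 17; 16].
  step [:: 9; 4; 3; 2; 1; 6; 5; 8; 7; 0; 11; 10; 13; 12; 17; 16; 15; 14].
  step [:: 13; 2; 1; 4; 3; 8; 7; 6; 5; 10; 9; 12; 11; 0; 15; 14; 17; 16].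
  step [:: 17; 12; 11; 10; 9; 6; 5; 8; 7; 4; 3; 2; 1; 14; 13; 16; 15; 0].
  step (ringseq 18).
  by [].
step [:: 17; 2; 1; 4; 3; 6; 5; 8; 7; 10; 9; 12; 11; 14; 13; 16; 15; 0].
step (ringseq 18).
by [].
Qed.

Lemma Good20 : Good 20.
Proof.
apply: (@Good_of 20 5) => //.
  step [:: 5; 2; 1; 4; 3; 0; 19; 18; 17; 16; 15; 12; 11; 14; 13; 10; 9; 8; 7; 6].
  step [:: 19; 4; 3; 2; 1; 6; 5; 8; 7; 10; 9; 14; 13; 12; 11; 16; 15; 18; 17; 0].
  step [:: 15; 2; 1; 4; 3; 10; 7; 6; 9; 8; 5; 12; 11; 14; 13; 0; 17; 16; 19; 18].
  step [:: 19; 14; 13; 12; 11; 6; 5; 8; 7; 10; 9; 4; 3; 2; 1; 16; 15; 18; 17; 0].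
  step (ringseq 20).
  by [].
step [:: 19; 2; 1; 4; 3; 6; 5; 8; 7; 10; 9; 12; 11; 14; 13; 16; 15; 18; 17; 0].
step (ringseq 20).
by [].
Qed.

Lemma Good22 : Good 22.
Proof.
apply: (@Good_of 22 7) => //.
  step [:: 3; 2; 1; 0; 21; 6; 5; 8; 7; 10; 9; 12; 11; 14; 13; 16; 15; 18; 17; 20; 19; 4].
  step [:: 1; 0; 3; 2; 5; 4; 7; 6; 21; 20; 19; 18; 13; 12; 15; 14; 17; 16; 11; 10; 9; 8].
  step [:: 7; 2; 1; 4; 3; 6; 5; 0; 9; 8; 11; 10; 17; 14; 13; 16; 15; 12; 19; 18; 21; 20].
  step [:: 11; 6; 3; 2; 5; 4; 1; 8; 7; 10; 9; 0; 13; 12; 15; 14; 17; 16; 21; 20; 19; 18].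
  step [:: 17; 2; 1; 4; 3; 6; 5; 10; 9; 8; 7; 12; 11; 14; 13; 16; 15; 0; 19; 18; 21; 20].
  step [:: 21; 16; 15; 14; 13; 12; 11; 8; 7; 10; 9; 6; 5; 4; 3; 2; 1; 18; 17; 20; 19; 0].
  step (ringseq 22).
  by [].
step [:: 21; 2; 1; 4; 3; 6; 5; 8; 7; 10; 9; 12; 11; 14; 13; 16; 15; 18; 17; 20; 19; 0].
step (ringseq 22).
by [].
Qed.

Lemma Good24 : Good 24.
Proof.
apply: (@Good_of 24 5) => //.
  step [:: 3; 2; 1; 0; 23; 6; 5; 22; 21; 20; 19; 12; 11; 14; 13; 16; 15; 18; 17; 10; 9; 8; 7; 4].
  step [:: 1; 0; 3; 2; 5; 4; 23; 8; 7; 10; 9; 14; 13; 12; 11; 18; 17; 16; 15; 20; 19; 22; 21; 6].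
  step [:: 23; 2; 1; 4; 3; 6; 5; 10; 9; 8; 7; 12; 11; 14; 13; 16; 15; 18; 17; 22; 21; 20; 19; 0].
  step [:: 17; 16; 15; 14; 13; 12; 11; 8; 7; 10; 9; 6; 5; 4; 3; 2; 1; 0; 23; 20; 19; 22; 21; 18].
  step (ringseq 24).
  by [].
step [:: 23; 2; 1; 4; 3; 6; 5; 8; 7; 10; 9; 12; 11; 14; 13; 16; 15; 18; 17; 20; 19; 22; 21; 0].
step (ringseq 24).
by [].
Qed.

Lemma Good26 : Good 26.
Proof.
apply: (@Good_of 26 5) => //.
  step [:: 5; 2; 1; 4; 3; 0; 15; 14; 13; 10; 9; 12; 11; 8; 7; 6; 25; 24; 23; 20; 19; 22; 21; 18; 17; 16].
  step [:: 25; 4; 3; 2; 1; 6; 5; 8; 7; 12; 11; 10; 9; 14; 13; 16; 15; 18; 17; 22; 21; 20; 19; 24; 23; 0].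
  step [:: 23; 2; 1; 4; 3; 8; 7; 6; 5; 10; 9; 12; 11; 18; 15; 14; 17; 16; 13; 20; 19; 22; 21; 0; 25; 24].
  step [:: 25; 22; 21; 10; 9; 6; 5; 8; 7; 4; 3; 20; 19; 14; 13; 16; 15; 18; 17; 12; 11; 2; 1; 24; 23; 0].
  step (ringseq 26).
  by [].
step [:: 25; 2; 1; 4; 3; 6; 5; 8; 7; 10; 9; 12; 11; 14; 13; 16; 15; 18; 17; 20; 19; 22; 21; 24; 23; 0].
step (ringseq 26).
by [].
Qed.

Lemma Good28 : Good 28.
Proof.
apply: (@Good_of 28 5) => //.
  step [:: 17; 8; 7; 4; 3; 6; 5; 2; 1; 16; 15; 12; 11; 14; 13; 10; 9; 0; 27; 26; 25; 22; 21; 24; 23; 20; 19; 18].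
  step [:: 27; 2; 1; 6; 5; 4; 3; 8; 7; 10; 9; 14; 13; 12; 11; 16; 15; 18; 17; 20; 19; 24; 23; 22; 21; 26; 25; 0].
  step [:: 1; 0; 25; 4; 3; 6; 5; 10; 9; 8; 7; 12; 11; 14; 13; 20; 17; 16; 19; 18; 15; 22; 21; 24; 23; 2; 27; 26].
  step [:: 27; 2; 1; 24; 23; 12; 11; 8; 7; 10; 9; 6; 5; 22; 21; 16; 15; 18; 17; 20; 19; 14; 13; 4; 3; 26; 25; 0].
  step (ringseq 28).
  by [].
step [:: 27; 2; 1; 4; 3; 6; 5; 8; 7; 10; 9; 12; 11; 14; 13; 16; 15; 18; 17; 20; 19; 22; 21; 24; 23; 26; 25; 0].
step (ringseq 28).
by [].
Qed.

Lemma Good30 : Good 30.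
Proof.
apply: (@Good_of 30 5) => //.
  step [:: 19; 18; 11; 10; 9; 6; 5; 8; 7; 4; 3; 2; 17; 14; 13; 16; 15; 12; 1; 0; 29; 28; 27; 24; 23; 26; 25; 22; 21; 20].
  step [:: 29; 2; 1; 4; 3; 8; 7; 6; 5; 10; 9; 12; 11; 16; 15; 14; 13; 18; 17; 20; 19; 22; 21; 26; 25; 24; 23; 28; 27; 0].
  step [:: 1; 0; 3; 2; 27; 6; 5; 8; 7; 12; 11; 10; 9; 14; 13; 16; 15; 22; 19; 18; 21; 20; 17; 24; 23; 26; 25; 4; 29; 28].
  step [:: 29; 2; 1; 4; 3; 26; 25; 14; 13; 10; 9; 12; 11; 8; 7; 24; 23; 18; 17; 20; 19; 22; 21; 16; 15; 6; 5; 28; 27; 0].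
  step (ringseq 30).
  by [].
step [:: 29; 2; 1; 4; 3; 6; 5; 8; 7; 10; 9; 12; 11; 14; 13; 16; 15; 18; 17; 20; 19; 22; 21; 24; 23; 26; 25; 28; 27; 0].
step (ringseq 30).
by [].
Qed.

Lemma Good_all k : 8 <= k -> Good k.*2.
Proof.
elim/ltn_ind: k => k IH hk.
case: (leqP k 15) => h.
  have [j ej] : exists j, k = 8 + j by exists (k - 8); lia.
  have hj : j <= 7 by lia.
  rewrite ej; clear ej IH h hk.
  do 8 (case: j hj => [_|j hj]; first by first [exact: Good16 | exact: Good18 | exact: Good20 | exact: Good22 | exact: Good24 | exact: Good26 | exact: Good28 | exact: Good30]).
  by [].
have -> : k.*2 = 16 + (k - 8).*2 by lia.
apply: Good_add; rewrite ?odd_double //; first exact: Good16.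
apply: IH; lia.
Qed.

Theorem mainTheorem17 (k : nat) (hk : 8 <= k) :
  ~ induced_bipartite (dcm_component (ring1 k)).
Proof. exact: Good_nb (Good_all hk). Qed.
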